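(* Let $X$ be a first countable, connected, locally path connected space, $n\in\mathbb{N}$, and let $A_1,\dots,A_n$ be pairwise disjoint, path connected, closed subsets of $X$ such that $X/(A_1,\dots,A_n)$ is semi-locally simply connected. Let $p:X\to X/(A_1,\dots,A_n)$ be the quotient map. Then for every $a\in\bigcup_{i=1}^nA_i$, with $*=p(a)$, the induced homomorphism $p_*:\pi_1(X,a)\to\pi_1(X/(A_1,\dots,A_n),* )$ is surjective.
   Context: $X/(A_1,\dots,A_n)$ denotes the quotient space obtained by collapsing each $A_i$ to a point, with quotient map $p$. A space $Y$ is semi-locally simply connected if every $y\in Y$ has an open neighborhood $U$ such that every loop in $U$ based at $y$ is nullhomotopic in $Y$. *)

(* Defs.v *)
From Stdlib Require Import Reals Lra.
Open Scope R_scope.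

Record Top := {
  carrier :> Type;
  isOpen : (carrier -> Prop) -> Prop;
  open_full : isOpen (fun _ => True);
  open_inter : forall U V, isOpen U -> isOpen V -> isOpen (fun x => U x /\ V x);
  open_union : forall (J : Type) (G : J -> carrier -> Prop),
      (forall j, isOpen (G j)) -> isOpen (fun x => exists j, G j x)
}.
Arguments isOpen {t} _.

Definition isClosed {X : Top} (A : X -> Prop) : Prop :=
  isOpen (fun x => ~ A x).

Definition I := { t : R | 0 <= t <= 1 }.
Definition I0 : I := exist _ 0 (conj (Rle_refl 0) Rle_0_1).
Definition I1 : I := exist _ 1 (conj Rle_0_1 (Rle_refl 1)).

Definition I_open (V : I -> Prop) : Prop :=
  forall t, V t -> exists eps, eps > 0 /\
    forall s : I, Rabs (proj1_sig s - proj1_sig t) < eps -> V s.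

Definition I2_open (V : I * I -> Prop) : Prop :=
  forall p, V p -> exists eps, eps > 0 /\
    forall q : I * I,
      Rabs (proj1_sig (fst q) - proj1_sig (fst p)) < eps ->
      Rabs (proj1_sig (snd q) - proj1_sig (snd p)) < eps -> V q.

Definition contI {X : Top} (f : I -> X) : Prop :=
  forall U, isOpen U -> I_open (fun t => U (f t)).
Definition contI2 {X : Top} (H : I * I -> X) : Prop :=
  forall U, isOpen U -> I2_open (fun p => U (H p)).

Definition path_homotopic {X : Top} (f g : I -> X) : Prop :=
  exists H : I * I -> X, contI2 H /\
    (forall s, H (s, I0) = f s) /\ (forall s, H (s, I1) = g s) /\
    (forall t, H (I0, t) = f I0) /\ (forall t, H (I1, t) = f I1).

Definition is_loop {X : Top} (x : X) (f : I -> X) : Prop :=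
  contI f /\ f I0 = x /\ f I1 = x.

Definition connected (X : Top) : Prop :=
  ~ exists U V : X -> Prop, isOpen U /\ isOpen V /\
      (exists x, U x) /\ (exists x, V x) /\
      (forall x, U x \/ V x) /\ (forall x, ~ (U x /\ V x)).

Definition path_connected_set {X : Top} (A : X -> Prop) : Prop :=
  forall x y, A x -> A y ->
    exists f : I -> X, contI f /\ f I0 = x /\ f I1 = y /\ forall t, A (f t).

Definition locally_path_connected (X : Top) : Prop :=
  forall (x : X) (U : X -> Prop), isOpen U -> U x ->
    exists V : X -> Prop, isOpen V /\ V x /\ (forall y, V y -> U y) /\
      path_connected_set V.

Definition first_countable (X : Top) : Prop :=
  forall x : X, exists B : nat -> X -> Prop,
    (forall k, isOpen (B k) /\ B k x) /\
    (forall U, isOpen U -> U x -> exists k, forall y, B k y -> U y).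

Definition semi_locally_simply_connected (Y : Top) : Prop :=
  forall y : Y, exists U : Y -> Prop, isOpen U /\ U y /\
    forall f : I -> Y, is_loop y f -> (forall t, U (f t)) ->
      path_homotopic f (fun _ => y).

(** The quotient X/(A_0,...,A_{n-1}) collapsing each A_i (i < n) to a point. *)
Section Quotient.
Variables (X : Top) (n : nat) (A : nat -> X -> Prop).

Definition qrel (x y : X) : Prop :=
  x = y \/ exists i, (i < n)%nat /\ A i x /\ A i y.

Definition qcarrier := { S : X -> Prop | exists x, S = qrel x }.

Definition qmap (x : X) : qcarrier := exist _ (qrel x) (ex_intro _ x eq_refl).

Definition qopen (U : qcarrier -> Prop) : Prop := isOpen (fun x => U (qmap x)).

Lemma qopen_full : qopen (fun _ => True).
Proof. exact (open_full X). Qed.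
Lemma qopen_inter : forall U V, qopen U -> qopen V -> qopen (fun x => U x /\ V x).
Proof. intros U V HU HV; exact (open_inter X _ _ HU HV). Qed.
Lemma qopen_union : forall (J : Type) (G : J -> qcarrier -> Prop),
    (forall j, qopen (G j)) -> qopen (fun x => exists j, G j x).
Proof. intros J G HG; exact (open_union X J (fun j x => G j (qmap x)) HG). Qed.

Definition quotient : Top :=
  {| carrier := qcarrier; isOpen := qopen;
     open_full := qopen_full; open_inter := qopen_inter;
     open_union := qopen_union |}.

Definition qp : X -> quotient := qmap.
End Quotient.

(* Main.v *)
Require Import Defs.
From Stdlib Require Import Reals Lra ProofIrrelevance FunctionalExtensionality PropExtensionality Classical ClassicalEpsilon.
Open Scope R_scope.

Definition clamp (r : R) : R := Rmax 0 (Rmin r 1).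
Lemma clamp_in r : 0 <= clamp r <= 1.
Proof. unfold clamp, Rmax, Rmin. repeat destruct Rle_dec; lra. Qed.
Definition mkI (r : R) : I := exist _ (clamp r) (clamp_in r).
Definition vI (s : I) : R := proj1_sig s.
Lemma vI_in (s : I) : 0 <= vI s <= 1.
Proof. exact (proj2_sig s). Qed.
Lemma clamp_id r : 0 <= r <= 1 -> clamp r = r.
Proof. unfold clamp, Rmax, Rmin. intros. repeat destruct Rle_dec; lra. Qed.
Lemma clamp_le0 r : r <= 0 -> clamp r = 0.
Proof. unfold clamp, Rmax, Rmin. intros. repeat destruct Rle_dec; lra. Qed.
Lemma clamp_ge1 r : 1 <= r -> clamp r = 1.
Proof. unfold clamp, Rmax, Rmin. intros. repeat destruct Rle_dec; lra. Qed.
Lemma clamp_lip a b : Rabs (clamp a - clamp b) <= Rabs (a - b).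
Proof. unfold clamp, Rmax, Rmin. repeat destruct Rle_dec; unfold Rabs; repeat destruct Rcase_abs; lra. Qed.
Lemma I_eq (s t : I) : vI s = vI t -> s = t.
Proof. destruct s, t; unfold vI; simpl; intros; subst; f_equal; apply proof_irrelevance. Qed.
Lemma vI_mkI r : vI (mkI r) = clamp r.
Proof. reflexivity. Qed.
Lemma mkI_val s : mkI (vI s) = s.
Proof. apply I_eq. rewrite vI_mkI. apply clamp_id, vI_in. Qed.
Lemma mkI_eq r r' : r = r' -> mkI r = mkI r'.
Proof. intros; subst; reflexivity. Qed.
Lemma mkI_0 : mkI 0 = I0.
Proof. apply I_eq. rewrite vI_mkI. apply clamp_id; simpl; lra. Qed.
Lemma mkI_1 : mkI 1 = I1.
Proof. apply I_eq. rewrite vI_mkI. apply clamp_id; simpl; lra. Qed.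
Lemma vI0 : vI I0 = 0. Proof. reflexivity. Qed.
Lemma vI1 : vI I1 = 1. Proof. reflexivity. Qed.

Definition sP (p : I * I) := vI (fst p).
Definition tP (p : I * I) := vI (snd p).
Definition lip2 (F : I * I -> R) : Prop := exists L, 0 < L /\
  forall p q, Rabs (F q - F p) <= L * (Rabs (sP q - sP p) + Rabs (tP q - tP p)).
Definition lip1 (F : I -> R) : Prop := exists L, 0 < L /\
  forall s s', Rabs (F s' - F s) <= L * Rabs (vI s' - vI s).

Lemma lip2_const c : lip2 (fun _ => c).
Proof. exists 1; split; [lra|]. intros. replace (c - c) with 0 by ring. rewrite Rabs_R0.
  pose proof (Rabs_pos (sP q - sP p)); pose proof (Rabs_pos (tP q - tP p)); lra. Qed.
Lemma lip2_s : lip2 sP.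
Proof. exists 1; split; [lra|]. intros. pose proof (Rabs_pos (tP q - tP p)); lra. Qed.
Lemma lip2_t : lip2 tP.
Proof. exists 1; split; [lra|]. intros. pose proof (Rabs_pos (sP q - sP p)); lra. Qed.
Lemma lip2_plus F G : lip2 F -> lip2 G -> lip2 (fun p => F p + G p).
Proof. intros [L1 [H1 E1]] [L2 [H2 E2]]. exists (L1 + L2); split; [lra|]. intros p q.
  specialize (E1 p q); specialize (E2 p q).
  replace (F q + G q - (F p + G p)) with ((F q - F p) + (G q - G p)) by ring.
  eapply Rle_trans; [apply Rabs_triang|]. lra. Qed.
Lemma lip2_scal c F : lip2 F -> lip2 (fun p => c * F p).
Proof. intros [L [H E]]. exists (L * (Rabs c + 1)); split.
  { pose proof (Rabs_pos c). nra. }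
  intros p q. replace (c * F q - c * F p) with (c * (F q - F p)) by ring.
  rewrite Rabs_mult. specialize (E p q). pose proof (Rabs_pos c).
  pose proof (Rabs_pos (sP q - sP p)); pose proof (Rabs_pos (tP q - tP p)).
  pose proof (Rabs_pos (F q - F p)). nra. Qed.
Lemma lip2_clamp F : lip2 F -> lip2 (fun p => clamp (F p)).
Proof. intros [L [H E]]. exists L; split; auto. intros p q.
  eapply Rle_trans; [apply clamp_lip|]. apply E. Qed.
Lemma lip2_bnd F : lip2 F -> exists B, forall p, Rabs (F p) <= B.
Proof. intros [L [H E]]. exists (Rabs (F (I0, I0)) + 2 * L). intros p.
  specialize (E (I0, I0) p). pose proof (vI_in (fst p)); pose proof (vI_in (snd p)).
  unfold sP, tP in E; simpl in E. change (vI I0) with 0 in E.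
  rewrite (Rabs_right (vI (fst p) - 0)) in E by lra.
  rewrite (Rabs_right (vI (snd p) - 0)) in E by lra.
  replace (F p) with (F (I0, I0) + (F p - F (I0, I0))) by ring.
  eapply Rle_trans; [apply Rabs_triang|]. nra. Qed.
Lemma lip2_mult F G : lip2 F -> lip2 G -> lip2 (fun p => F p * G p).
Proof. intros HF HG. destruct (lip2_bnd _ HF) as [B1 EB1]. destruct (lip2_bnd _ HG) as [B2 EB2].
  destruct HF as [L1 [H1 E1]], HG as [L2 [H2 E2]].
  assert (0 <= B1) by (specialize (EB1 (I0,I0)); pose proof (Rabs_pos (F (I0,I0))); lra).
  assert (0 <= B2) by (specialize (EB2 (I0,I0)); pose proof (Rabs_pos (G (I0,I0))); lra).
  exists (B1 * L2 + B2 * L1 + 1); split; [nra|]. intros p q.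
  replace (F q * G q - F p * G p) with (F q * (G q - G p) + G p * (F q - F p)) by ring.
  eapply Rle_trans; [apply Rabs_triang|]. rewrite !Rabs_mult.
  specialize (E1 p q); specialize (E2 p q). specialize (EB1 q); specialize (EB2 p).
  pose proof (Rabs_pos (sP q - sP p)); pose proof (Rabs_pos (tP q - tP p)).
  pose proof (Rabs_pos (F q - F p)); pose proof (Rabs_pos (G q - G p)).
  pose proof (Rabs_pos (F q)); pose proof (Rabs_pos (G p)).
  set (d := Rabs (sP q - sP p) + Rabs (tP q - tP p)) in *.
  assert (Rabs (F q) * Rabs (G q - G p) <= B1 * (L2 * d)) by (apply Rmult_le_compat; lra).
  assert (Rabs (G p) * Rabs (F q - F p) <= B2 * (L1 * d)) by (apply Rmult_le_compat; lra).
  nra. Qed.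

Lemma lip1_const c : lip1 (fun _ => c).
Proof. exists 1; split; [lra|]. intros. replace (c - c) with 0 by ring. rewrite Rabs_R0.
  pose proof (Rabs_pos (vI s' - vI s)); lra. Qed.
Lemma lip1_affine a b : lip1 (fun s => a + b * vI s).
Proof. exists (Rabs b + 1); split. { pose proof (Rabs_pos b); lra. }
  intros. replace (a + b * vI s' - (a + b * vI s)) with (b * (vI s' - vI s)) by ring.
  rewrite Rabs_mult. pose proof (Rabs_pos (vI s' - vI s)); nra. Qed.
Lemma lip1_to2 F : lip1 F -> lip2 (fun p => F (fst p)).
Proof. intros [L [H E]]. exists L; split; auto. intros. specialize (E (fst p) (fst q)).
  unfold sP. pose proof (Rabs_pos (tP q - tP p)). nra. Qed.

Lemma aux2 L L' a b d eps : 0 < L -> 0 <= L' -> a < d -> b < d -> d * (2 * (L + L')) = eps -> 0 <= a -> L * (a + b) < eps.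
Proof. intros. assert (L * (a + b) < L * (2 * d)) by (apply Rmult_lt_compat_l; lra).
  assert (0 <= L' * d) by (apply Rmult_le_pos; lra). nra. Qed.
Lemma aux1 L a d eps : 0 < L -> a < d -> d * L = eps -> L * a < eps.
Proof. intros. assert (L * a < L * d) by (apply Rmult_lt_compat_l; lra). nra. Qed.

Lemma comp22 {X : Top} (H : I * I -> X) F1 F2 : contI2 H -> lip2 F1 -> lip2 F2 ->
  contI2 (fun p => H (mkI (F1 p), mkI (F2 p))).
Proof.
  intros HH [L1 [P1 E1]] [L2 [P2 E2]] U HU p Hp.
  destruct (HH U HU (mkI (F1 p), mkI (F2 p)) Hp) as [eps [Heps Heq]].
  exists (eps / (2 * (L1 + L2))). split.
  { apply Rdiv_lt_0_compat; lra. }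
  intros q Hs Ht. apply Heq; cbn [fst snd proj1_sig mkI].
  - eapply Rle_lt_trans; [apply clamp_lip|]. eapply Rle_lt_trans; [apply E1|].
    unfold sP, tP, vI.
    set (d := eps / (2 * (L1 + L2))) in *.
    assert (d * (2 * (L1 + L2)) = eps) by (unfold d; field; lra).
    eapply aux2; eauto; try lra; apply Rabs_pos.
  - eapply Rle_lt_trans; [apply clamp_lip|]. eapply Rle_lt_trans; [apply E2|].
    unfold sP, tP, vI.
    set (d := eps / (2 * (L1 + L2))) in *.
    assert (d * (2 * (L2 + L1)) = eps) by (unfold d; field; lra).
    eapply aux2; eauto; try lra; apply Rabs_pos.
Qed.

Lemma comp21 {X : Top} (h : I -> X) F : contI h -> lip2 F ->
  contI2 (fun p => h (mkI (F p))).
Proof.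
  intros HH [L [P E]] U HU p Hp.
  destruct (HH U HU (mkI (F p)) Hp) as [eps [Heps Heq]].
  exists (eps / (2 * L)). split.
  { apply Rdiv_lt_0_compat; lra. }
  intros q Hs Ht. apply Heq; cbn [fst snd proj1_sig mkI].
  eapply Rle_lt_trans; [apply clamp_lip|]. eapply Rle_lt_trans; [apply E|].
  unfold sP, tP, vI.
  set (d := eps / (2 * L)) in *.
  assert (d * (2 * (L + 0)) = eps) by (unfold d; field; lra).
  eapply aux2; eauto; try lra; apply Rabs_pos.
Qed.

Lemma comp11 {X : Top} (h : I -> X) F : contI h -> lip1 F ->
  contI (fun s => h (mkI (F s))).
Proof.
  intros HH [L [P E]] U HU p Hp.
  destruct (HH U HU (mkI (F p)) Hp) as [eps [Heps Heq]].
  exists (eps / L). split.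
  { apply Rdiv_lt_0_compat; lra. }
  intros q Hs. apply Heq; cbn [fst snd proj1_sig mkI].
  eapply Rle_lt_trans; [apply clamp_lip|]. eapply Rle_lt_trans; [apply E|].
  unfold vI.
  set (d := eps / L) in *.
  assert (d * L = eps) by (unfold d; field; lra).
  eapply aux1; eauto.
Qed.

Lemma paste1 {X : Top} (F G : I -> X) : contI F -> contI G ->
  (forall s, vI s = 1/2 -> F s = G s) ->
  contI (fun s => if Rle_dec (vI s) (1/2) then F s else G s).
Proof.
  intros HF HG Hag U HU t Ht.
  destruct (Rtotal_order (vI t) (1/2)) as [Hlt|[Heq|Hgt]].
  - destruct (Rle_dec (vI t) (1/2)); [|lra].
    destruct (HF U HU t Ht) as [e [He E]].
    exists (Rmin e (1/2 - vI t)). split. { apply Rmin_pos; lra. }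
    intros s Hs. pose proof (Rmin_l e (1/2 - vI t)); pose proof (Rmin_r e (1/2 - vI t)).
    destruct (Rle_dec (vI s) (1/2)).
    + apply E; lra.
    + exfalso. unfold vI in *. apply n. apply Rabs_def2 in Hs. lra.
  - destruct (Rle_dec (vI t) (1/2)); [|lra].
    assert (Ht' : U (G t)) by (rewrite <- Hag; auto).
    destruct (HF U HU t Ht) as [e [He E]].
    destruct (HG U HU t Ht') as [e' [He' E']].
    exists (Rmin e e'). split. { apply Rmin_pos; lra. }
    intros s Hs. pose proof (Rmin_l e e'); pose proof (Rmin_r e e').
    destruct (Rle_dec (vI s) (1/2)); [apply E|apply E']; lra.
  - destruct (Rle_dec (vI t) (1/2)); [lra|].
    destruct (HG U HU t Ht) as [e [He E]].
    exists (Rmin e (vI t - 1/2)). split. { apply Rmin_pos; lra. }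
    intros s Hs. pose proof (Rmin_l e (vI t - 1/2)); pose proof (Rmin_r e (vI t - 1/2)).
    destruct (Rle_dec (vI s) (1/2)).
    + exfalso. unfold vI in *. apply Rabs_def2 in Hs. lra.
    + apply E; lra.
Qed.

Lemma paste2 {X : Top} (pi : I * I -> R) (F G : I * I -> X) :
  (forall p q e, Rabs (sP q - sP p) < e -> Rabs (tP q - tP p) < e -> Rabs (pi q - pi p) < e) ->
  contI2 F -> contI2 G ->
  (forall p, pi p = 1/2 -> F p = G p) ->
  contI2 (fun p => if Rle_dec (pi p) (1/2) then F p else G p).
Proof.
  intros Hpi HF HG Hag U HU t Ht.
  destruct (Rtotal_order (pi t) (1/2)) as [Hlt|[Heq|Hgt]].
  - destruct (Rle_dec (pi t) (1/2)); [|lra].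
    destruct (HF U HU t Ht) as [e [He E]].
    exists (Rmin e (1/2 - pi t)). split. { apply Rmin_pos; lra. }
    intros s Hs1 Hs2. pose proof (Rmin_l e (1/2 - pi t)); pose proof (Rmin_r e (1/2 - pi t)).
    destruct (Rle_dec (pi s) (1/2)).
    + apply E; lra.
    + exfalso. apply n. specialize (Hpi t s _ Hs1 Hs2). apply Rabs_def2 in Hpi. lra.
  - destruct (Rle_dec (pi t) (1/2)); [|lra].
    assert (Ht' : U (G t)) by (rewrite <- Hag; auto).
    destruct (HF U HU t Ht) as [e [He E]].
    destruct (HG U HU t Ht') as [e' [He' E']].
    exists (Rmin e e'). split. { apply Rmin_pos; lra. }
    intros s Hs1 Hs2. pose proof (Rmin_l e e'); pose proof (Rmin_r e e').
    destruct (Rle_dec (pi s) (1/2)); [apply E|apply E']; lra.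
  - destruct (Rle_dec (pi t) (1/2)); [lra|].
    destruct (HG U HU t Ht) as [e [He E]].
    exists (Rmin e (pi t - 1/2)). split. { apply Rmin_pos; lra. }
    intros s Hs1 Hs2. pose proof (Rmin_l e (pi t - 1/2)); pose proof (Rmin_r e (pi t - 1/2)).
    destruct (Rle_dec (pi s) (1/2)).
    + exfalso. specialize (Hpi t s _ Hs1 Hs2). apply Rabs_def2 in Hpi. lra.
    + apply E; lra.
Qed.

Lemma pi_s p q e : Rabs (sP q - sP p) < e -> Rabs (tP q - tP p) < e -> Rabs (sP q - sP p) < e.
Proof. auto. Qed.
Lemma pi_t p q e : Rabs (sP q - sP p) < e -> Rabs (tP q - tP p) < e -> Rabs (tP q - tP p) < e.
Proof. auto. Qed.

Lemma lip2_minus F G : lip2 F -> lip2 G -> lip2 (fun p => F p - G p).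
Proof. intros. unfold Rminus. apply lip2_plus; auto.
  replace (fun p => - G p) with (fun p => -1 * G p) by (apply functional_extensionality; intros; ring).
  apply lip2_scal; auto. Qed.
Lemma lip1_fst F : lip1 F -> lip2 (fun p => F (fst p)).
Proof. apply lip1_to2. Qed.

Lemma lip2_opp F : lip2 F -> lip2 (fun p => - F p).
Proof. intros.
  replace (fun p => - F p) with (fun p => -1 * F p) by (apply functional_extensionality; intros; ring).
  apply lip2_scal; auto. Qed.
Ltac lipauto := repeat first [ apply lip2_const | apply lip2_s | apply lip2_t
  | apply lip2_plus | apply lip2_minus | apply lip2_opp | apply lip2_mult | apply lip2_clamp
  | apply lip1_fst | apply lip1_affine | apply lip1_const ].

Definition concat {X : Top} (f g : I -> X) (s : I) : X :=
  if Rle_dec (vI s) (1/2) then f (mkI (0 + 2 * vI s)) else g (mkI (-1 + 2 * vI s)).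
Definition rev {X : Top} (f : I -> X) (s : I) : X := f (mkI (1 + -1 * vI s)).

Lemma contI_mk {X : Top} (f : I -> X) a b : contI f -> contI (fun s => f (mkI (a + b * vI s))).
Proof. intros. apply comp11; auto. apply lip1_affine. Qed.

Lemma cont_concat {X : Top} (f g : I -> X) : contI f -> contI g -> f I1 = g I0 -> contI (concat f g).
Proof. intros Hf Hg E. unfold concat. apply paste1; try apply contI_mk; auto.
  intros s Hs. rewrite Hs. rewrite (mkI_eq (0 + 2 * (1/2)) 1) by field.
  rewrite (mkI_eq (-1 + 2 * (1/2)) 0) by field. rewrite mkI_0, mkI_1; auto. Qed.
Lemma concat_0 {X : Top} (f g : I -> X) : concat f g I0 = f I0.
Proof. unfold concat. rewrite vI0. destruct Rle_dec; [|lra].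
  rewrite (mkI_eq (0 + 2 * 0) 0) by ring. rewrite mkI_0; auto. Qed.
Lemma concat_1 {X : Top} (f g : I -> X) : concat f g I1 = g I1.
Proof. unfold concat. rewrite vI1. destruct Rle_dec; [lra|].
  rewrite (mkI_eq (-1 + 2 * 1) 1) by ring. rewrite mkI_1; auto. Qed.
Lemma cont_rev {X : Top} (f : I -> X) : contI f -> contI (rev f).
Proof. intros. apply contI_mk; auto. Qed.
Lemma rev_0 {X : Top} (f : I -> X) : rev f I0 = f I1.
Proof. unfold rev. rewrite vI0, (mkI_eq (1 + -1 * 0) 1) by ring. rewrite mkI_1; auto. Qed.
Lemma rev_1 {X : Top} (f : I -> X) : rev f I1 = f I0.
Proof. unfold rev. rewrite vI1, (mkI_eq (1 + -1 * 1) 0) by ring. rewrite mkI_0; auto. Qed.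
Lemma rev_rev {X : Top} (f : I -> X) : rev (rev f) = f.
Proof. apply functional_extensionality. intros s. unfold rev. f_equal.
  apply I_eq. rewrite !vI_mkI. pose proof (vI_in s).
  rewrite (clamp_id (1 + -1 * vI s)) by lra. rewrite clamp_id; lra. Qed.

Lemma ph_refl {X : Top} (f : I -> X) : contI f -> path_homotopic f f.
Proof. intros Hf. exists (fun p => f (mkI (sP p))). split.
  { apply comp21; auto. apply lip2_s. }
  unfold sP; simpl. repeat split; intros; rewrite ?mkI_val; auto. all: fold (vI I0) (vI I1); rewrite ?mkI_val; auto. all: rewrite ?mkI_0, ?mkI_1; auto. Qed.

Lemma ph_sym {X : Top} (f g : I -> X) : path_homotopic f g -> path_homotopic g f.
Proof. intros [H [HC [E0 [E1 [F0 F1]]]]].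
  exists (fun p => H (mkI (sP p), mkI (1 + -1 * tP p))). split.
  { apply comp22; auto; lipauto. }
  unfold sP, tP; simpl. try fold (vI I0) (vI I1); try rewrite vI0; try rewrite vI1.
  rewrite (mkI_eq (1 + -1 * 0) 1), (mkI_eq (1 + -1 * 1) 0) by ring. rewrite mkI_0, mkI_1.
  repeat split; intros; rewrite ?mkI_val; auto.
  - rewrite F0, <- E1, F0; auto.
  - rewrite F1, <- E1, F1; auto.
Qed.

Lemma ph_trans {X : Top} (f g h : I -> X) : path_homotopic f g -> path_homotopic g h -> path_homotopic f h.
Proof. intros [H [HC [E0 [E1 [F0 F1]]]]] [K [KC [G0 [G1 [J0 J1]]]]].
  exists (fun p => if Rle_dec (tP p) (1/2) then H (mkI (sP p), mkI (0 + 2 * tP p))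
                   else K (mkI (sP p), mkI (-1 + 2 * tP p))). split.
  { apply paste2.
    - apply pi_t.
    - apply comp22; auto; lipauto.
    - apply comp22; auto; lipauto.
    - intros p Hp. rewrite Hp. rewrite (mkI_eq (0 + 2 * (1/2)) 1) by field.
      rewrite (mkI_eq (-1 + 2 * (1/2)) 0) by field. rewrite mkI_0, mkI_1, E1, G0; auto. }
  unfold sP, tP; simpl. try fold (vI I0) (vI I1); try rewrite vI0; try rewrite vI1.
  assert (g I0 = f I0) by (rewrite <- E1, F0; auto).
  assert (g I1 = f I1) by (rewrite <- E1, F1; auto).
  repeat split; intros.
  - destruct Rle_dec; [|lra]. rewrite (mkI_eq (0 + 2 * 0) 0) by ring. rewrite mkI_0, mkI_val; auto.
  - destruct Rle_dec; [lra|]. rewrite (mkI_eq (-1 + 2 * 1) 1) by ring. rewrite mkI_1, mkI_val; auto.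
  - destruct Rle_dec. rewrite mkI_0; auto. rewrite mkI_0, J0; auto.
  - destruct Rle_dec. rewrite mkI_1; auto. rewrite mkI_1, J1; auto.
Qed.

Lemma ph_concat {X : Top} (f1 g1 f2 g2 : I -> X) : path_homotopic f1 g1 -> path_homotopic f2 g2 ->
  f1 I1 = f2 I0 -> path_homotopic (concat f1 f2) (concat g1 g2).
Proof. intros [H [HC [E0 [E1 [F0 F1]]]]] [K [KC [G0 [G1 [J0 J1]]]]] Hm.
  exists (fun p => if Rle_dec (sP p) (1/2) then H (mkI (0 + 2 * sP p), mkI (tP p))
                   else K (mkI (-1 + 2 * sP p), mkI (tP p))). split.
  { apply paste2.
    - apply pi_s.
    - apply comp22; auto; lipauto.
    - apply comp22; auto; lipauto.
    - intros p Hp. rewrite Hp. rewrite (mkI_eq (0 + 2 * (1/2)) 1) by field.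
      rewrite (mkI_eq (-1 + 2 * (1/2)) 0) by field. rewrite mkI_0, mkI_1, F1, J0; auto. }
  unfold sP, tP; simpl. rewrite ?mkI_0, ?mkI_1.
  unfold concat. change (vI I0) with 0; change (vI I1) with 1. repeat split; intros.
  - destruct Rle_dec; auto.
  - destruct Rle_dec; auto.
  - destruct Rle_dec; [|lra]. rewrite (mkI_eq (0 + 2 * 0) 0) by ring.
    rewrite mkI_0, mkI_val, F0; auto.
  - destruct Rle_dec; [lra|]. rewrite (mkI_eq (-1 + 2 * 1) 1) by ring.
    rewrite mkI_1, mkI_val, J1; auto.
Qed.

Lemma ph_rev {X : Top} (f g : I -> X) : path_homotopic f g -> path_homotopic (rev f) (rev g).
Proof. intros [H [HC [E0 [E1 [F0 F1]]]]].
  exists (fun p => H (mkI (1 + -1 * sP p), mkI (tP p))). split.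
  { apply comp22; auto; lipauto. }
  unfold sP, tP, rev; simpl. try fold (vI I0) (vI I1); try rewrite vI0; try rewrite vI1.
  rewrite ?mkI_0, ?mkI_1.
  rewrite (mkI_eq (1 + -1 * 0) 1), (mkI_eq (1 + -1 * 1) 0) by ring. rewrite mkI_0, mkI_1.
  repeat split; intros; rewrite ?mkI_val; auto.
Qed.

Lemma ph_reparam {X : Top} (h : I -> X) (p0 p1 : I -> R) : contI h -> lip1 p0 -> lip1 p1 ->
  p0 I0 = p1 I0 -> p0 I1 = p1 I1 ->
  path_homotopic (fun s => h (mkI (p0 s))) (fun s => h (mkI (p1 s))).
Proof. intros Hh L0 L1 E0 E1.
  exists (fun p => h (mkI ((1 - tP p) * p0 (fst p) + tP p * p1 (fst p)))). split.
  { apply comp21; auto; lipauto; auto. }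
  unfold tP; simpl. try fold (vI I0) (vI I1); try rewrite vI0; try rewrite vI1.
  repeat split; intros; f_equal; apply mkI_eq; try ring.
  - rewrite E0; ring.
  - rewrite E1; ring.
Qed.

Lemma concat_lo {X : Top} (f g : I -> X) r : 0 <= r <= 1/2 -> concat f g (mkI r) = f (mkI (2 * r)).
Proof. intros. unfold concat. rewrite vI_mkI, clamp_id by lra. destruct Rle_dec; [|lra].
  f_equal; apply mkI_eq; ring. Qed.
Lemma concat_hi {X : Top} (f g : I -> X) r : 1/2 < r <= 1 -> concat f g (mkI r) = g (mkI (2 * r - 1)).
Proof. intros. unfold concat. rewrite vI_mkI, clamp_id by lra. destruct Rle_dec; [lra|].
  f_equal; apply mkI_eq; ring. Qed.
Lemma rev_mk {X : Top} (f : I -> X) r : 0 <= r <= 1 -> rev f (mkI r) = f (mkI (1 - r)).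
Proof. intros. unfold rev. rewrite vI_mkI, clamp_id by lra. f_equal; apply mkI_eq; ring. Qed.

Lemma seg_core {Y : Top} (y1 y2 : Y) (U : Y -> Prop) (u v : I -> Y) :
  (forall f, is_loop y1 f -> (forall t, U (f t)) -> path_homotopic f (fun _ => y1)) ->
  contI u -> contI v -> u I0 = y1 -> v I0 = y1 -> u I1 = y2 -> v I1 = y2 ->
  (forall t, U (u t)) -> (forall t, U (v t)) -> path_homotopic u v.
Proof.
  intros HS Cu Cv u0 v0 u1 v1 Uu Uv.
  set (L := concat u (rev v)).
  assert (CL : contI L). { apply cont_concat; auto. apply cont_rev; auto. rewrite rev_0; congruence. }
  assert (L0 : L I0 = y1) by (unfold L; rewrite concat_0; auto).
  assert (L1 : L I1 = y1) by (unfold L; rewrite concat_1, rev_1; auto).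
  assert (UL : forall t, U (L t)). { intros t; unfold L, concat, rev. destruct Rle_dec; auto. }
  destruct (HS L (conj CL (conj L0 L1)) UL) as [H [HC [E0 [E1 [F0 F1]]]]].
  rewrite L0 in F0. rewrite L1 in F1.
  exists (fun p => H (mkI (1/2 + (1 - sP p) * (-1/2 + clamp (3 * tP p - 1))),
                    mkI ((1 - sP p) * (clamp (3 * tP p) - clamp (3 * tP p - 2))))).
  split. { apply comp22; auto; lipauto. }
  unfold sP, tP. cbn [fst snd]. change (vI I0) with 0. change (vI I1) with 1.
  repeat split; intros.
  - pose proof (vI_in s).
    rewrite (clamp_le0 (3 * 0 - 1)), (clamp_le0 (3 * 0)), (clamp_le0 (3 * 0 - 2)) by lra.
    rewrite (mkI_eq ((1 - vI s) * (0 - 0)) 0) by ring. rewrite mkI_0, E0.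
    unfold L. rewrite concat_lo by lra. rewrite <- (mkI_val s) at 2. f_equal. apply mkI_eq; field.
  - pose proof (vI_in s).
    rewrite (clamp_ge1 (3 * 1 - 1)), (clamp_ge1 (3 * 1)), (clamp_ge1 (3 * 1 - 2)) by lra.
    rewrite (mkI_eq ((1 - vI s) * (1 - 1)) 0) by ring. rewrite mkI_0, E0.
    unfold L. destruct (Req_dec (vI s) 1) as [Hs|Hs].
    + rewrite concat_lo by (rewrite Hs; lra). rewrite Hs.
      rewrite (mkI_eq (2 * (1 / 2 + (1 - 1) * (-1 / 2 + 1))) 1) by field. rewrite mkI_1.
      replace s with I1 by (apply I_eq; rewrite Hs; reflexivity). congruence.
    + rewrite concat_hi by lra. rewrite rev_mk.
      2: lra.
      rewrite <- (mkI_val s) at 2. f_equal. apply mkI_eq. field.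
  - pose proof (vI_in t). rewrite u0.
    destruct (Rle_dec (3 * vI t - 1) 0).
    + rewrite (clamp_le0 (3 * vI t - 1)) by lra.
      rewrite (mkI_eq (1 / 2 + (1 - 0) * (-1 / 2 + 0)) 0) by field. rewrite mkI_0; auto.
    + destruct (Rle_dec (3 * vI t - 2) 0).
      * rewrite (clamp_le0 (3 * vI t - 2)), (clamp_ge1 (3 * vI t)) by lra.
        rewrite (mkI_eq ((1 - 0) * (1 - 0)) 1) by ring. rewrite mkI_1; auto.
      * rewrite (clamp_ge1 (3 * vI t - 1)) by lra.
        rewrite (mkI_eq (1 / 2 + (1 - 0) * (-1 / 2 + 1)) 1) by field. rewrite mkI_1; auto.
  - rewrite (mkI_eq (1 / 2 + (1 - 1) * (-1 / 2 + clamp (3 * vI t - 1))) (1/2)) by ring.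
    rewrite (mkI_eq ((1 - 1) * (clamp (3 * vI t) - clamp (3 * vI t - 2))) 0) by ring.
    rewrite mkI_0, E0. unfold L. rewrite concat_lo by lra.
    rewrite (mkI_eq (2 * (1/2)) 1) by field. rewrite mkI_1; auto.
Qed.

Definition Disj (X : Top) (n : nat) (A : nat -> X -> Prop) :=
  forall i j x, (i < n)%nat -> (j < n)%nat -> i <> j -> A i x -> A j x -> False.

Lemma contI_const {X : Top} (x : X) : contI (fun _ : I => x).
Proof. intros U HU t Ht. exists 1; split; [lra|]. auto. Qed.

Lemma qp_cont (X : Top) n A (f : I -> X) : contI f -> contI (fun s => qp X n A (f s)).
Proof. intros Hf U HU. exact (Hf (fun x => U (qp X n A x)) HU). Qed.

Lemma q_surj (X : Top) n A (q : quotient X n A) : exists x, qp X n A x = q.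
Proof. destruct q as [S [x HS]]. exists x. subst S. unfold qp, qmap.
  apply subset_eq_compat. reflexivity. Qed.

Lemma q_eq_inv (X : Top) n A (x x' : X) : qp X n A x = qp X n A x' ->
  x = x' \/ exists i, (i < n)%nat /\ A i x /\ A i x'.
Proof. intros E. apply (f_equal (@proj1_sig _ _)) in E. simpl in E.
  assert (H : qrel X n A x' x') by (left; auto). rewrite <- E in H. exact H. Qed.

Lemma q_eq_A (X : Top) n A i (x x' : X) : Disj X n A -> (i < n)%nat -> A i x -> A i x' ->
  qp X n A x = qp X n A x'.
Proof. intros D Hi Hx Hx'. unfold qp, qmap. apply subset_eq_compat.
  apply functional_extensionality; intros z; apply propositional_extensionality.
  unfold qrel. split.
  - intros [E|[j [Hj [Hjx Hjz]]]].
    + subst z. right. exists i. auto.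
    + right. exists i. split; auto. split; auto.
      destruct (Nat.eq_dec j i); [subst; auto|]. exfalso. eapply D; eauto.
  - intros [E|[j [Hj [Hjx Hjz]]]].
    + subst z. right. exists i. auto.
    + right. exists i. split; auto. split; auto.
      destruct (Nat.eq_dec j i); [subst; auto|]. exfalso. eapply D; eauto.
Qed.

Lemma fiber_path (X : Top) n A (x x' : X) : Disj X n A ->
  (forall i, (i < n)%nat -> path_connected_set (A i)) ->
  qp X n A x = qp X n A x' ->
  exists d : I -> X, contI d /\ d I0 = x /\ d I1 = x' /\ forall t, qp X n A (d t) = qp X n A x.
Proof. intros D PC E. destruct (q_eq_inv X n A x x' E) as [<-|[i [Hi [Hx Hx']]]].
  - exists (fun _ => x). repeat split; auto. apply contI_const.
  - destruct (PC i Hi x x' Hx Hx') as [d [Cd [d0 [d1 Hd]]]].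
    exists d. repeat split; auto. intros t. eapply q_eq_A; eauto.
Qed.

Definition Cset (X : Top) n A (y : quotient X n A) (U : quotient X n A -> Prop) (x : X) : Prop :=
  exists g : I -> X, contI g /\ g I0 = x /\ qp X n A (g I1) = y /\ forall t, U (qp X n A (g t)).

Lemma C_W X n A y U x : Cset X n A y U x -> U (qp X n A x).
Proof. intros [g [_ [g0 [_ Hg]]]]. rewrite <- g0. auto. Qed.
Lemma C_Uy X n A y U x : Cset X n A y U x -> U y.
Proof. intros [g [_ [_ [g1 Hg]]]]. rewrite <- g1. auto. Qed.

Lemma U_concat {X : Top} (P : X -> Prop) (f g : I -> X) :
  (forall t, P (f t)) -> (forall t, P (g t)) -> forall t, P (concat f g t).
Proof. intros. unfold concat. destruct Rle_dec; auto. Qed.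

Lemma C_sat X n A y U x x' : Disj X n A -> (forall i, (i < n)%nat -> path_connected_set (A i)) ->
  Cset X n A y U x -> qp X n A x' = qp X n A x -> Cset X n A y U x'.
Proof. intros D PC HC E. pose proof (C_W _ _ _ _ _ _ HC) as HW.
  destruct HC as [g [Cg [g0 [g1 Hg]]]].
  destruct (fiber_path X n A x' x D PC E) as [d [Cd [d0 [d1 Hd]]]].
  exists (concat d g). repeat split.
  - apply cont_concat; auto; congruence.
  - rewrite concat_0; auto.
  - rewrite concat_1; auto.
  - apply (U_concat (fun z => U (qp X n A z))); auto. intros t; rewrite Hd, E; auto.
Qed.

Lemma C_fiber X n A (y : quotient X n A) U x : qp X n A x = y -> U y -> Cset X n A y U x.
Proof. intros E Uy. exists (fun _ => x). repeat split; auto. apply contI_const.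
  intros; rewrite E; auto. Qed.

Lemma C_path X n A y U x1 x2 : Disj X n A -> (forall i, (i < n)%nat -> path_connected_set (A i)) ->
  Cset X n A y U x1 -> Cset X n A y U x2 ->
  exists g : I -> X, contI g /\ g I0 = x1 /\ g I1 = x2 /\ forall t, U (qp X n A (g t)).
Proof. intros D PC H1 H2. pose proof (C_Uy _ _ _ _ _ _ H1) as Uy.
  destruct H1 as [g1 [C1 [g10 [g11 Hg1]]]]. destruct H2 as [g2 [C2 [g20 [g21 Hg2]]]].
  destruct (fiber_path X n A (g1 I1) (g2 I1) D PC) as [d [Cd [d0 [d1 Hd]]]]; [congruence|].
  exists (concat g1 (concat d (rev g2))). repeat split.
  - apply cont_concat; auto. apply cont_concat; auto. apply cont_rev; auto.
    rewrite rev_0; auto. rewrite concat_0; auto.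
  - rewrite concat_0; auto.
  - rewrite !concat_1, rev_1; auto.
  - apply (U_concat (fun z => U (qp X n A z))); auto.
    apply (U_concat (fun z => U (qp X n A z))); auto.
    + intros t; rewrite Hd, g11; auto.
    + intros t; unfold rev; auto.
Qed.

Lemma C_open X n A y U : locally_path_connected X -> @isOpen (quotient X n A) U ->
  isOpen (Cset X n A y U).
Proof. intros LPC HU.
  set (J := { xN : X * (X -> Prop) | Cset X n A y U (fst xN) /\ isOpen (snd xN) /\ snd xN (fst xN) /\
     (forall z, snd xN z -> U (qp X n A z)) /\ path_connected_set (snd xN) }).
  pose proof (open_union X J (fun j => snd (proj1_sig j))) as HO.
  assert (E : (fun x => exists j : J, snd (proj1_sig j) x) = Cset X n A y U).
  { apply functional_extensionality; intros z; apply propositional_extensionality. split.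
    - intros [j Nz]. destruct j as [[x N] HH]. simpl in *. destruct HH as [HC [HN [Nx [NU NP]]]].
      destruct (NP z x Nz Nx) as [b [Cb [b0 [b1 Hb]]]].
      destruct HC as [g [Cg [g0 [g1 Hg]]]].
      exists (concat b g). repeat split.
      + apply cont_concat; auto; congruence.
      + rewrite concat_0; auto.
      + rewrite concat_1; auto.
      + apply (U_concat (fun z => U (qp X n A z))); auto.
    - intros HC. destruct (LPC z (fun w => U (qp X n A w)) HU (C_W _ _ _ _ _ _ HC))
        as [N [HN [Nz [NU NP]]]].
      exists (exist _ (z, N) (conj HC (conj HN (conj Nz (conj NU NP))))). simpl. auto. }
  rewrite <- E. apply HO. intros j. destruct j as [[x N] HH]. simpl. apply HH.
Qed.

Definition Vset X n A y U (q : quotient X n A) : Prop := forall x, qp X n A x = q -> Cset X n A y U x.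

Lemma V_open X n A y U : Disj X n A -> (forall i, (i < n)%nat -> path_connected_set (A i)) ->
  locally_path_connected X -> @isOpen (quotient X n A) U -> @isOpen (quotient X n A) (Vset X n A y U).
Proof. intros D PC LPC HU. simpl. unfold qopen.
  assert (E : (fun x => Vset X n A y U (qmap X n A x)) = Cset X n A y U).
  { apply functional_extensionality; intros z; apply propositional_extensionality. split.
    - intros H. apply H. reflexivity.
    - intros H x' E. eapply C_sat; eauto. }
  rewrite E. apply C_open; auto. Qed.

Lemma lip1_plus F G : lip1 F -> lip1 G -> lip1 (fun s => F s + G s).
Proof. intros [L1 [H1 E1]] [L2 [H2 E2]]. exists (L1 + L2); split; [lra|]. intros s s'.
  specialize (E1 s s'); specialize (E2 s s').
  replace (F s' + G s' - (F s + G s)) with ((F s' - F s) + (G s' - G s)) by ring.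
  eapply Rle_trans; [apply Rabs_triang|]. lra. Qed.
Lemma lip1_scal c F : lip1 F -> lip1 (fun s => c * F s).
Proof. intros [L [H E]]. exists (L * (Rabs c + 1)); split.
  { pose proof (Rabs_pos c). nra. }
  intros s s'. replace (c * F s' - c * F s) with (c * (F s' - F s)) by ring.
  rewrite Rabs_mult. specialize (E s s'). pose proof (Rabs_pos c).
  pose proof (Rabs_pos (vI s' - vI s)). pose proof (Rabs_pos (F s' - F s)). nra. Qed.
Lemma lip1_clamp F : lip1 F -> lip1 (fun s => clamp (F s)).
Proof. intros [L [H E]]. exists L; split; auto. intros s s'.
  eapply Rle_trans; [apply clamp_lip|]. apply E. Qed.

Definition Qp (X : Top) n A (a : X) (g : I -> quotient X n A) (c : R) : Prop :=
  forall x, qp X n A x = g (mkI c) -> exists f : I -> X, contI f /\ f I0 = a /\ f I1 = x /\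
    path_homotopic (fun s => qp X n A (f s)) (fun s => g (mkI (c * vI s))).

Definition good (X : Top) n A (g : I -> quotient X n A) (c1 c2 : R) : Prop :=
  exists y U, @isOpen (quotient X n A) U /\
    (forall f, is_loop y f -> (forall t, U (f t)) -> path_homotopic f (fun _ => y)) /\
    (y = g (mkI c1) \/ y = g (mkI c2)) /\
    forall r, c1 <= r <= c2 -> Vset X n A y U (g (mkI r)).

Lemma Q_ext X n A a g c1 c2 : Disj X n A -> (forall i, (i < n)%nat -> path_connected_set (A i)) ->
  contI g -> 0 <= c1 <= c2 -> c2 <= 1 -> Qp X n A a g c1 -> good X n A g c1 c2 -> Qp X n A a g c2.
Proof.
  intros D PC Cg Hc1 Hc2 HQ [y [U [HU [HS [Hy HV]]]]] x2 Ex2.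
  destruct (q_surj X n A (g (mkI c1))) as [x1 Ex1].
  destruct (HQ x1 Ex1) as [f [Cf [f0 [f1 Hf]]]].
  assert (C1 : Cset X n A y U x1) by (apply (HV c1); [lra|auto]).
  assert (C2 : Cset X n A y U x2) by (apply (HV c2); [lra|auto]).
  destruct (C_path X n A y U x1 x2 D PC C1 C2) as [gm [Cgm [gm0 [gm1 Hgm]]]].
  set (u := fun s => g (mkI (c1 + (c2 - c1) * vI s))).
  set (v := fun s => qp X n A (gm s)).
  assert (Cu : contI u) by (apply contI_mk; auto).
  assert (Cv : contI v) by (apply qp_cont; auto).
  assert (u0 : u I0 = g (mkI c1)) by (unfold u; f_equal; apply mkI_eq; change (vI I0) with 0; ring).
  assert (u1 : u I1 = g (mkI c2)) by (unfold u; f_equal; apply mkI_eq; change (vI I1) with 1; ring).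
  assert (v0 : v I0 = g (mkI c1)) by (unfold v; rewrite gm0; auto).
  assert (v1 : v I1 = g (mkI c2)) by (unfold v; rewrite gm1; auto).
  assert (Uu : forall t, U (u t)).
  { intros t. unfold u. pose proof (vI_in t).
    destruct (q_surj X n A (g (mkI (c1 + (c2 - c1) * vI t)))) as [z Ez].
    rewrite <- Ez. eapply C_W. apply (HV (c1 + (c2 - c1) * vI t)); auto. split; nra. }
  assert (Uv : forall t, U (v t)) by (unfold v; auto).
  assert (Huv : path_homotopic u v).
  { destruct Hy as [Hy|Hy]; subst y.
    - exact (seg_core _ _ U u v HS Cu Cv u0 v0 u1 v1 Uu Uv).
    - assert (path_homotopic (rev u) (rev v)).
      { apply (seg_core (g (mkI c2)) (g (mkI c1)) U); auto.
        - apply cont_rev; auto.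
        - apply cont_rev; auto.
        - rewrite rev_0; auto.
        - rewrite rev_0; auto.
        - rewrite rev_1; auto.
        - rewrite rev_1; auto.
        - intros t; unfold rev; auto.
        - intros t; unfold rev; auto. }
      rewrite <- (rev_rev u), <- (rev_rev v). apply ph_rev; auto. }
  exists (concat f gm). repeat split.
  - apply cont_concat; auto; congruence.
  - rewrite concat_0; auto.
  - rewrite concat_1; auto.
  - assert (E1 : (fun s => qp X n A (concat f gm s)) = concat (fun s => qp X n A (f s)) v).
    { apply functional_extensionality; intros s; unfold concat, v; destruct Rle_dec; auto. }
    rewrite E1.
    set (p1 := fun s => c1 * clamp (0 + 2 * vI s) + (c2 - c1) * clamp (-1 + 2 * vI s)).
    set (p0 := fun s => 0 + c2 * vI s).
    assert (E2 : concat (fun s => g (mkI (c1 * vI s))) u = fun s => g (mkI (p1 s))).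
    { apply functional_extensionality; intros s; unfold concat, u, p1. pose proof (vI_in s).
      destruct Rle_dec; f_equal; apply mkI_eq; rewrite vI_mkI.
      - rewrite (clamp_le0 (-1 + 2 * vI s)) by lra. ring.
      - rewrite (clamp_ge1 (0 + 2 * vI s)) by lra. ring. }
    assert (E3 : (fun s => g (mkI (c2 * vI s))) = fun s => g (mkI (p0 s))).
    { apply functional_extensionality; intros s; unfold p0; f_equal; apply mkI_eq; ring. }
    eapply ph_trans.
    { apply ph_concat; [exact Hf | apply ph_sym; exact Huv | cbv beta; rewrite f1; unfold v; rewrite gm0; auto]. }
    rewrite E2, E3. apply ph_reparam; auto.
    + unfold p1. apply lip1_plus; apply lip1_scal; apply lip1_clamp; apply lip1_affine.
    + unfold p0. apply lip1_affine.
    + unfold p1, p0. change (vI I0) with 0.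
      rewrite (clamp_le0 (0 + 2 * 0)), (clamp_le0 (-1 + 2 * 0)) by lra. ring.
    + unfold p1, p0. change (vI I1) with 1.
      rewrite (clamp_ge1 (0 + 2 * 1)), (clamp_ge1 (-1 + 2 * 1)) by lra. ring.
Qed.

Lemma Q_base X n A a g : Disj X n A -> (forall i, (i < n)%nat -> path_connected_set (A i)) ->
  g I0 = qp X n A a -> Qp X n A a g 0.
Proof. intros D PC g0 x Ex. rewrite mkI_0, g0 in Ex.
  destruct (fiber_path X n A a x D PC (eq_sym Ex)) as [d [Cd [d0 [d1 Hd]]]].
  exists d. repeat split; auto.
  assert (E : (fun s => qp X n A (d s)) = (fun s => g (mkI (0 * vI s)))).
  { apply functional_extensionality; intros s. rewrite Hd, (mkI_eq (0 * vI s) 0) by ring.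
    rewrite mkI_0; auto. }
  rewrite E. rewrite <- E. apply ph_refl. apply qp_cont; auto. Qed.

Theorem corollary3p13 (X : Top) (n : nat) (A : nat -> X -> Prop) :
  first_countable X -> connected X -> locally_path_connected X ->
  (forall i j x, (i < n)%nat -> (j < n)%nat -> i <> j -> A i x -> A j x -> False) ->
  (forall i, (i < n)%nat -> path_connected_set (A i)) ->
  (forall i, (i < n)%nat -> isClosed (A i)) ->
  semi_locally_simply_connected (quotient X n A) ->
  forall a : X, (exists i, (i < n)%nat /\ A i a) ->
  forall g : I -> quotient X n A, is_loop (qp X n A a) g ->
    exists f : I -> X, is_loop a f /\
      path_homotopic (fun t => qp X n A (f t)) g.
Proof.
  intros _ _ LPC D PC _ SLSC a _ g [Cg [g0 g1]].
  set (Ep := fun c => 0 <= c <= 1 /\ Qp X n A a g c).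
  assert (Hb : bound Ep) by (exists 1; intros c [Hc _]; lra).
  assert (He : exists c, Ep c) by (exists 0; split; [lra|apply Q_base; auto]).
  destruct (completeness Ep Hb He) as [m [Hub Hlub]].
  assert (m0 : 0 <= m) by (apply Hub; split; [lra|apply Q_base; auto]).
  assert (m1 : m <= 1) by (apply Hlub; intros c [Hc _]; lra).
  destruct (SLSC (g (mkI m))) as [U [HU [Uy HS]]].
  pose proof (V_open X n A (g (mkI m)) U D PC LPC HU) as HV.
  assert (Vm : Vset X n A (g (mkI m)) U (g (mkI m))) by (intros x Ex; apply C_fiber; auto).
  destruct (Cg _ HV (mkI m) Vm) as [eps [Heps Heq]].
  assert (Near : forall r, 0 <= r <= 1 -> Rabs (r - m) < eps -> Vset X n A (g (mkI m)) U (g (mkI r))).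
  { intros r Hr Hd. apply Heq. change (Rabs (clamp r - clamp m) < eps).
    rewrite !clamp_id by lra. auto. }
  assert (Ex : exists c', Ep c' /\ m - eps < c').
  { apply NNPP; intros Hn.
    assert (m <= m - eps); [|lra].
    apply Hlub. intros c Hc. destruct (Rle_dec c (m - eps)); auto.
    exfalso; apply Hn; exists c; split; auto; lra. }
  destruct Ex as [c' [[Hc' Qc'] Hc'm]].
  assert (c'm : c' <= m) by (apply Hub; split; auto).
  assert (Qm : Qp X n A a g m).
  { apply (Q_ext X n A a g c'); auto; try lra.
    exists (g (mkI m)), U. repeat split; auto.
    intros r Hr. apply Near; try lra. apply Rabs_def1; lra. }
  assert (mone : m = 1).
  { destruct (Req_dec m 1) as [|Hm]; auto. exfalso.
    set (m2 := Rmin 1 (m + eps / 2)).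
    assert (m2 <= 1) by apply Rmin_l. assert (m2 <= m + eps / 2) by apply Rmin_r.
    assert (m < m2) by (unfold m2; apply Rmin_glb_lt; lra).
    assert (Qm2 : Qp X n A a g m2).
    { apply (Q_ext X n A a g m); auto; try lra.
      exists (g (mkI m)), U. repeat split; auto.
      intros r Hr. apply Near; try lra. apply Rabs_def1; lra. }
    assert (m2 <= m) by (apply Hub; split; auto; lra). lra. }
  subst m.
  destruct (Qm a) as [f [Cf [f0 [f1 Hf]]]].
  { rewrite mkI_1; auto. }
  exists f. split. { repeat split; auto. }
  assert (E : (fun s => g (mkI (1 * vI s))) = g).
  { apply functional_extensionality; intros s. rewrite (mkI_eq (1 * vI s) (vI s)) by ring.
    rewrite mkI_val; auto. }
  rewrite E in Hf. exact Hf.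
Qed.
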